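(* Let $P:\{-1,1\}^k\to\{0,1\}$ be a predicate and $Q:\{-1,1\}^k\to\mathbb{R}$. Then $P$ is positively information-theoretically useless for $Q$ if and only if there exists a probability measure $\mu$ on $\{-1,1\}^k$ supported on $P^{-1}(1)$ such that $\mathrm{Opt}^+(Q,\mu)=E_Q^+$.
   Context: Boolean values are encoded as $\pm1$. An instance of Max-$P^+$ (no negations) on variables $x_1,\dots,x_n$ consists of $m$ constraints, constraint $j$ given by indices $a_j^1,\dots,a_j^k\in[n]$ pairwise distinct within the constraint; for $x\in\{-1,1\}^n$ let $x_{a_j}=(x_{a_j^1},\dots,x_{a_j^k})$. For $r\in[-1,1]$, let $E_Q(r)=\mathbb{E}[Q(x)]$ where $x$ has independent coordinates each with expectation $r$ (i.e., $x_i=1$ with probability $(1+r)/2$), and $E_Q^+=\max_{r\in[-1,1]}E_Q(r)$. $P$ is positively information-theoretically useless for $Q$ if for every $\epsilon>0$ there is a Max-$P^+$ instance with $\max_x\frac1m\sum_j P(x_{a_j})=1$ and $\max_x\frac1m\sum_j Q(x_{a_j})\le E_Q^+ +\epsilon$. For a probability measure $\mu$ on $\{-1,1\}^k$ and $p,q\in[0,1]$, $\mu^{p,q}$ is obtained by sampling a string from $\mu$ and then, independently for each coordinate, changing a coordinate equal to $1$ to $-1$ with probability $p$ and a coordinate equal to $-1$ to $1$ with probability $q$. $\mathrm{Opt}^+(Q,\mu)=\max_{p,q\in[0,1]}\mathbb{E}_{x\sim\mu^{p,q}}[Q(x)]$. *)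

(* Defs.v *)
From HB Require Import structures.
From mathcomp Require Import all_boot all_order all_algebra.
From mathcomp Require Import boolp classical_sets reals.
Set Implicit Arguments. Unset Strict Implicit. Unset Printing Implicit Defensive.
Import Order.TTheory GRing.Theory Num.Theory.
Local Open Scope ring_scope.
Local Open Scope classical_set_scope.

(* Boolean values +-1 encoded as bool: true = 1, false = -1. *)
Definition cube (k : nat) := {ffun 'I_k -> bool}.

Definition sgn {R : realType} (b : bool) : R := if b then 1 else -1.

(* E_Q(r): expectation of Q under independent coordinates of mean r,
   i.e. x_i = 1 with probability (1+r)/2 and x_i = -1 with prob. (1-r)/2. *)
Definition EQ {R : realType} (k : nat) (Q : cube k -> R) (r : R) : R :=
  \sum_(x : cube k) Q x * \prod_(i < k) ((1 + sgn (x i) * r) / 2).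

(* E_Q^+ = max_{r in [-1,1]} E_Q(r) (a polynomial in r, so sup = max). *)
Definition EQplus {R : realType} (k : nat) (Q : cube k -> R) : R :=
  sup [set EQ Q r | r in [set r : R | -1 <= r <= 1]].

(* Transition probability of one coordinate in mu^{p,q}: a 1 becomes -1
   with prob. p, a -1 becomes 1 with prob. q. *)
Definition flip {R : realType} (p q : R) (b c : bool) : R :=
  if b then (if c then 1 - p else p) else (if c then q else 1 - q).

Definition Enoisy {R : realType} (k : nat) (Q : cube k -> R) (mu : cube k -> R)
  (p q : R) : R :=
  \sum_(x : cube k) mu x *
    \sum_(y : cube k) (\prod_(i < k) flip p q (x i) (y i)) * Q y.

Definition Optplus {R : realType} (k : nat) (Q : cube k -> R) (mu : cube k -> R) : R :=
  sup [set Enoisy Q mu pq.1 pq.2 | pq in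
        [set pq : R * R | (0 <= pq.1 <= 1) /\ (0 <= pq.2 <= 1)]].

Definition prob_supported_on {R : realType} (k : nat) (P : cube k -> bool)
  (mu : cube k -> R) : Prop :=
  (forall x, 0 <= mu x) /\ (\sum_(x : cube k) mu x = 1) /\
  (forall x, mu x != 0 -> P x).

(* A Max-P^+ instance on n variables with m constraints; constraint j is the
   index tuple a j : 'I_k -> 'I_n, with pairwise distinct entries. *)
Definition restrict (n k : nat) (x : {ffun 'I_n -> bool}) (aj : 'I_k -> 'I_n)
  : cube k := [ffun i => x (aj i)].

Definition inst_val {R : realType} (n m k : nat) (F : cube k -> R)
  (a : 'I_m -> 'I_k -> 'I_n) (x : {ffun 'I_n -> bool}) : R :=
  m%:R^-1 * \sum_(j < m) F (restrict x (a j)).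

Definition pos_useless {R : realType} (k : nat) (P : cube k -> bool)
  (Q : cube k -> R) : Prop :=
  forall eps : R, 0 < eps ->
  exists (n m : nat) (a : 'I_m -> 'I_k -> 'I_n),
    (0 < m)%N /\ (forall j, injective (a j)) /\
    (exists x, inst_val (fun y => (P y)%:R : R) a x = 1) /\
    (forall x, inst_val (fun y => (P y)%:R : R) a x <= 1) /\
    (forall x, inst_val Q a x <= EQplus Q + eps).

(* Main.v *)
Require Import Defs.
From HB Require Import structures.
From mathcomp Require Import all_boot all_order all_algebra.
From mathcomp Require Import boolp classical_sets reals.
From mathcomp Require Import all_classical all_reals all_analysis.
From mathcomp Require Import ring lra.
Import Order.TTheory GRing.Theory Num.Theory.
Local Open Scope ring_scope.
Set Implicit Arguments. Unset Strict Implicit. Unset Printing Implicit Defensive.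
Local Open Scope classical_set_scope.
Lemma cluster_lemma (R : realType) (T : finType) (A : R -> set (T -> R)) :
 (forall e, 0 < e -> exists f, A e f /\ forall x, 0 <= f x <= 1) ->
 (forall e1 e2, 0 < e1 -> e1 <= e2 -> A e1 `<=` A e2) ->
 exists mu : T -> R, (forall x, 0 <= mu x <= 1) /\
   forall e d, 0 < e -> 0 < d -> exists f, A e f /\ forall x, `|f x - mu x| < d.
Proof.
move=> Hne Hmono.
pose RT : topologicalType := numFieldTopology.Real_sort__canonical__order_topology_POrderedTopological R.
pose K := fun _ : T => RT.
pose box : set (prod_topology K) := [set f | forall i, (`[0, 1] : set R) (f i)].
have cbox : compact box.
  exact: (@tychonoff T K (fun _ => `[0, 1]%classic) (fun _ => @segment_compact R 0 1)).
pose B e : set (prod_topology K) := A e `&` box.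
pose F := filter_from [set e : R | 0 < e] B.
have FF : ProperFilter F.
  apply: filter_from_proper.
    apply: filter_from_filter; first by exists 1; rewrite /= ltr01.
    move=> i j /= i0 j0; exists (Num.min i j); first by rewrite /= lt_min i0.
    move=> f [Af bf]; split; split => //; apply: Hmono Af => //; rewrite ?lt_min ?i0 ?ge_min ?lexx //.
    by rewrite orbT.
  move=> e /= e0; have [f [Af bf]] := Hne e e0; exists f; split => // i.
have Fbox : F box by exists 1 => //= f [].
have [mu [bmu clmu]] := cbox F FF Fbox.
exists mu; split.
  by move=> x; have := bmu x; rewrite /= in_itv.
move=> e d e0 d0.
have Fe : F (B e) by exists e.
have nb : nbhs mu [set f : prod_topology K | forall x, `|f x - mu x| < d].
  have : \forall f \near (mu : prod_topology K), forall x, `|f x - mu x| < d.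
    apply: (@filter_forall (prod_topology K) T (fun x (f : prod_topology K) => `|f x - mu x| < d) (nbhs (mu : prod_topology K))).
    move=> x.
    have := @proj_continuous T K x mu [set y : R | `|y - mu x| < d].
    apply.
    apply/nbhs_ballP; exists d => //= y; rewrite /ball /= distrC.
    by [].
  by [].
have [f [[Af _] Hf]] := clmu _ _ Fe nb.
by exists f.
Qed.
Local Close Scope classical_set_scope.
Lemma flip_ge0 (R : realType) (p q : R) b c : 0 <= p <= 1 -> 0 <= q <= 1 -> 0 <= flip p q b c.
Proof. by case: b; case: c => /= /andP[? ?] /andP[? ?]; rewrite ?subr_ge0. Qed.

Lemma flip_le1 (R : realType) (p q : R) b c : 0 <= p <= 1 -> 0 <= q <= 1 -> flip p q b c <= 1.
Proof. by case: b; case: c => /= /andP[? ?] /andP[? ?]; rewrite ?gerBl. Qed.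

Lemma flip_sum (R : realType) (p q : R) b : \sum_(c : bool) flip p q b c = 1.
Proof. by rewrite big_bool; case: b => /=; rewrite ?subrK // addrC subrK. Qed.

Lemma prod_flip_sum (R : realType) k (p q : R) (x : cube k) :
  \sum_(y : cube k) \prod_(i < k) flip p q (x i) (y i) = 1.
Proof.
transitivity (\prod_(i < k) \sum_(c : bool) flip p q (x i) c).
  by rewrite bigA_distr_bigA.
by rewrite big1 // => i _; exact: flip_sum.
Qed.

Lemma prod_flip_ge0 (R : realType) k (p q : R) (x y : cube k) :
  0 <= p <= 1 -> 0 <= q <= 1 -> 0 <= \prod_(i < k) flip p q (x i) (y i).
Proof. by move=> hp hq; apply: prodr_ge0 => i _; exact: flip_ge0. Qed.

Lemma prod_flip_le1 (R : realType) k (p q : R) (x y : cube k) :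
  0 <= p <= 1 -> 0 <= q <= 1 -> \prod_(i < k) flip p q (x i) (y i) <= 1.
Proof.
move=> hp hq; apply: prodr_ile1 => i _.
by rewrite flip_ge0 ?flip_le1.
Qed.

Definition Hn (R : realType) k (Q : cube k -> R) (p q : R) (x : cube k) : R :=
  \sum_(y : cube k) (\prod_(i < k) flip p q (x i) (y i)) * Q y.

Definition Bq (R : realType) k (Q : cube k -> R) : R := \sum_(y : cube k) `|Q y|.

Lemma Bq_ge0 (R : realType) k (Q : cube k -> R) : 0 <= Bq Q.
Proof. by apply: sumr_ge0 => y _. Qed.

Lemma Hn_bound (R : realType) k (Q : cube k -> R) (p q : R) x :
  0 <= p <= 1 -> 0 <= q <= 1 -> `|Hn Q p q x| <= Bq Q.
Proof.
move=> hp hq; apply: le_trans (ler_norm_sum _ _ _) _.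
apply: ler_sum => y _; rewrite normrM ger0_norm ?prod_flip_ge0 //.
by apply: ler_piMl => //; exact: prod_flip_le1.
Qed.

Lemma EnoisyE (R : realType) k (Q : cube k -> R) mu p q :
  Enoisy Q mu p q = \sum_x mu x * Hn Q p q x.
Proof. by []. Qed.
Local Open Scope classical_set_scope.

Lemma Enoisy_absle (R : realType) k (Q : cube k -> R) mu p q :
  0 <= p <= 1 -> 0 <= q <= 1 ->
  Enoisy Q mu p q <= (\sum_x `|mu x|) * Bq Q.
Proof.
move=> hp hq; rewrite EnoisyE mulr_suml.
apply: le_trans (ler_norm _) _; apply: le_trans (ler_norm_sum _ _ _) _.
apply: ler_sum => x _; rewrite normrM; apply: ler_wpM2l => //.
exact: Hn_bound.
Qed.

Lemma Opt_ub (R : realType) k (Q : cube k -> R) mu p q :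
  0 <= p <= 1 -> 0 <= q <= 1 -> Enoisy Q mu p q <= Optplus Q mu.
Proof.
move=> hp hq; apply: ub_le_sup; last by exists (p, q).
exists ((\sum_x `|mu x|) * Bq Q) => _ [[p' q'] /= [hp' hq'] <-].
exact: Enoisy_absle.
Qed.

Lemma Opt_le (R : realType) k (Q : cube k -> R) mu c :
  (forall p q, 0 <= p <= 1 -> 0 <= q <= 1 -> Enoisy Q mu p q <= c) ->
  Optplus Q mu <= c.
Proof.
move=> H; apply: ge_sup.
  by exists (Enoisy Q mu 0 0), (0, 0) => //=; rewrite lexx ler01.
by move=> _ [[p' q'] /= [hp' hq'] <-]; exact: H.
Qed.

Lemma Enoisy_diff (R : realType) k (Q : cube k -> R) mu f p q :
  0 <= p <= 1 -> 0 <= q <= 1 ->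
  Enoisy Q mu p q <= Enoisy Q f p q + Bq Q * \sum_x `|mu x - f x|.
Proof.
move=> hp hq; rewrite -lerBlDl !EnoisyE -sumrB mulr_sumr.
apply: ler_sum => x _; rewrite -mulrBl.
apply: le_trans (ler_norm _) _; rewrite normrM mulrC.
by apply: ler_wpM2r => //; exact: Hn_bound.
Qed.

Lemma Opt_diff (R : realType) k (Q : cube k -> R) mu f :
  Optplus Q mu <= Optplus Q f + Bq Q * \sum_x `|mu x - f x|.
Proof.
apply: Opt_le => p q hp hq; apply: le_trans (Enoisy_diff _ _ _ hp hq) _.
by apply: lerD => //; exact: Opt_ub.
Qed.

Lemma EQ_Enoisy (R : realType) k (Q : cube k -> R) mu r :
  \sum_x mu x = 1 -> EQ Q r = Enoisy Q mu ((1 - r) / 2) ((1 + r) / 2).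
Proof.
move=> hmu; rewrite EnoisyE.
have HE : forall x, Hn Q ((1 - r) / 2) ((1 + r) / 2) x = EQ Q r.
  move=> x; rewrite /Hn /EQ; apply: eq_bigr => y _; rewrite mulrC; congr (_ * _).
  apply: eq_bigr => i _; rewrite /flip /sgn.
  by case: (x i); case: (y i); rewrite ?mul1r ?mulN1r //; field.
rewrite (eq_bigr (fun x => mu x * EQ Q r)); last by move=> x _; rewrite HE.
by rewrite -mulr_suml hmu mul1r.
Qed.

Lemma EQplus_le_Opt (R : realType) k (Q : cube k -> R) mu :
  \sum_x mu x = 1 -> EQplus Q <= Optplus Q mu.
Proof.
move=> hmu; apply: ge_sup.
  by exists (EQ Q 0), 0 => //=; apply/andP; split; lra.
move=> _ [r /= /andP[r1 r2] <-]; rewrite (EQ_Enoisy _ _ hmu).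
by apply: Opt_ub; apply/andP; split; lra.
Qed.
Local Close Scope classical_set_scope.
Lemma ind_restrict (R : realType) n k (x : {ffun 'I_n -> bool}) (a : 'I_k -> 'I_n) (z : cube k) :
  \prod_(i < k) ((x (a i) == z i)%:R : R) = ((Defs.restrict x a == z)%:R).
Proof.
case: eqP => [<-|ne].
  by rewrite big1 // => i _; rewrite ffunE eqxx.
case: (boolP [forall i, x (a i) == z i]) => [/forallP H|/forallPn [i Hi]].
  by exfalso; apply: ne; apply/ffunP => i; rewrite ffunE; apply/eqP.
by rewrite (bigD1 i) //= (negbTE Hi) mul0r.
Qed.

Lemma sum_ind (R : realType) k (g : cube k -> R) (w : cube k) :
  \sum_(z : cube k) g z * (w == z)%:R = g w.
Proof.
rewrite (bigD1 w) //= eqxx mulr1 big1 ?addr0 // => z hz.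
by rewrite eq_sym (negbTE hz) mulr0.
Qed.

Lemma marg (R : realType) k n (a : 'I_k -> 'I_n) (ha : injective a) (p q : R)
  (xs : {ffun 'I_n -> bool}) (g : cube k -> R) :
  \sum_(x' : {ffun 'I_n -> bool}) (\prod_(v < n) flip p q (xs v) (x' v)) * g (Defs.restrict x' a)
  = \sum_(z : cube k) (\prod_(i < k) flip p q (xs (a i)) (z i)) * g z.
Proof.
transitivity (\sum_(z : cube k) g z * \sum_(x' : {ffun 'I_n -> bool})
   (\prod_(v < n) flip p q (xs v) (x' v)) * \prod_(i < k) ((x' (a i) == z i)%:R : R)).
  under [RHS]eq_bigr => z _ do rewrite mulr_sumr.
  rewrite [RHS]exchange_big /=; apply: eq_bigr => x' _.
  rewrite -(sum_ind g (Defs.restrict x' a)) mulr_sumr; apply: eq_bigr => z _.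
  by rewrite ind_restrict mulrCA.
apply: eq_bigr => z _; rewrite mulrC; congr (_ * _).
have Hpart : forall (x' : {ffun 'I_n -> bool}),
    \prod_(i < k) ((x' (a i) == z i)%:R : R) =
    \prod_(v < n) \prod_(i < k | a i == v) ((x' v == z i)%:R : R).
  move=> x'; rewrite (partition_big a predT) //=; apply: eq_bigr => v _.
  by apply: eq_bigr => i /eqP ->.
under eq_bigr => x' _ do rewrite Hpart -big_split /=.
rewrite -(bigA_distr_bigA (fun v b => flip p q (xs v) b * \prod_(i < k | a i == v) ((b == z i)%:R : R))).
rewrite [RHS](partition_big a predT) //=; apply: eq_bigr => v _.
case: (pickP (fun i => a i == v)) => [i0 /eqP Hi0 | none].
  have Heq : forall i, (a i == v) = (i == i0) by move=> i; rewrite -Hi0 (inj_eq ha).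
  rewrite (eq_bigl (pred1 i0)) // big_pred1_eq.
  under eq_bigr => b _ do rewrite (eq_bigl (pred1 i0)) // big_pred1_eq.
  rewrite big_bool -Hi0; case: (z i0) => /=; rewrite ?mulr1 ?mulr0 ?addr0 ?add0r //.
rewrite [RHS]big_pred0; last by move=> i; exact: none.
rewrite (eq_bigr (fun b => flip p q (xs v) b)); first exact: flip_sum.
by move=> b _; rewrite big_pred0 ?mulr1 // => i; exact: none.
Qed.
Lemma sum_ord_one (R : realType) m : \sum_(j < m) (1 : R) = m%:R.
Proof. by rewrite sumr_const card_ord. Qed.

Lemma inst_to_mu (R : realType) k (P : cube k -> bool) (Q : cube k -> R) n m
  (a : 'I_m -> 'I_k -> 'I_n) (e : R) :
  (0 < m)%N -> (forall j, injective (a j)) ->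
  (exists x, inst_val (fun y => (P y)%:R : R) a x = 1) ->
  (forall x, inst_val Q a x <= EQplus Q + e) ->
  exists mu, prob_supported_on P mu /\ Optplus Q mu <= EQplus Q + e.
Proof.
move=> m0 ainj [xs Hxs] Hval.
have mR0 : (m%:R : R) != 0 by rewrite pnatr_eq0 -lt0n.
pose r j := Defs.restrict xs (a j).
have allP : forall j, P (r j).
  have H0 : \sum_(j < m) (1 - ((P (r j))%:R : R)) = 0.
    rewrite sumrB sum_ord_one.
    move: Hxs; rewrite /inst_val => /(congr1 (fun t => m%:R * t)).
    by rewrite mulrA mulfV // mul1r mulr1 => ->; rewrite subrr.
  have Hnn : forall i : 'I_m, true -> 0 <= 1 - ((P (r i))%:R : R).
    by move=> i _; case: (P (r i)); rewrite /= ?subrr ?subr0 ?ler01.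
  move=> j; have := psumr_eq0P Hnn H0 (i:=j) isT.
  by case: (P (r j)) => //=; rewrite subr0 => /eqP; rewrite oner_eq0.
pose mu (y : cube k) : R := m%:R^-1 * \sum_(j < m) ((r j == y)%:R).
exists mu; split; first split; [|split|].
- by move=> y; apply: mulr_ge0; rewrite ?invr_ge0 ?ler0n //; apply: sumr_ge0 => j _; rewrite ler0n.
- rewrite -mulr_sumr exchange_big /=.
  rewrite (eq_bigr (fun _ => 1)) ?sum_ord_one ?mulVf // => j _.
  transitivity (\sum_(z : cube k) (fun _ => (1 : R)) z * (r j == z)%:R).
    by apply: eq_bigr => z _; rewrite mul1r.
  exact: sum_ind.
- move=> y; apply: contraR => Py; rewrite /mu big1 ?mulr0 // => j _.
  by case: eqP => // Hj; move: Py; rewrite -Hj allP.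
apply: Opt_le => p q hp hq.
pose W (x' : {ffun 'I_n -> bool}) := \prod_(v < n) flip p q (xs v) (x' v).
have HE : Enoisy Q mu p q = \sum_(x' : {ffun 'I_n -> bool}) W x' * inst_val Q a x'.
  rewrite EnoisyE /mu.
  under eq_bigr => y _ do rewrite -mulrA mulr_suml.
  rewrite -mulr_sumr exchange_big /=.
  under [RHS]eq_bigr => x' _ do rewrite /inst_val mulrCA mulr_sumr.
  rewrite -[RHS]mulr_sumr; congr (_ * _); rewrite [RHS]exchange_big /=; apply: eq_bigr => j _.
  rewrite /W (marg (ainj j)).
  rewrite (bigD1 (r j)) //= eqxx mul1r big1 ?addr0; last first.
    by move=> y hy; rewrite eq_sym (negbTE hy) mul0r.
  by rewrite /Hn; apply: eq_bigr => z _; congr (_ * _); apply: eq_bigr => i _; rewrite ffunE.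
rewrite HE; apply: le_trans (_ : \sum_(x' : {ffun 'I_n -> bool}) W x' * (EQplus Q + e) <= _).
  apply: ler_sum => x' _; apply: ler_wpM2l; last exact: Hval.
  exact: (prod_flip_ge0 xs x' hp hq).
by rewrite -mulr_suml (prod_flip_sum p q xs) mul1r.
Qed.
Lemma small0 (R : realType) (a : R) : (forall d, 0 < d -> `|a| <= d) -> a = 0.
Proof.
move=> H; apply/eqP; rewrite -normr_le0; apply/ler_addgt0Pr => d d0.
by rewrite add0r; exact: H.
Qed.

Lemma le_sum_one (R : realType) k (f : cube k -> R) x :
  (forall y, 0 <= f y) -> f x <= \sum_y f y.
Proof.
by move=> H; rewrite (bigD1 x) //= lerDl; apply: sumr_ge0 => y _.
Qed.

Lemma dir1 (R : realType) k (P : cube k -> bool) (Q : cube k -> R) :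
  pos_useless P Q ->
  exists mu : cube k -> R, prob_supported_on P mu /\ Optplus Q mu = EQplus Q.
Proof.
move=> HU.
pose A (e : R) := [set f : cube k -> R | prob_supported_on P f /\ Optplus Q f <= EQplus Q + e]%classic.
have [mu [bmu Hcl]] : exists mu : cube k -> R, (forall x, 0 <= mu x <= 1) /\
   forall e d, 0 < e -> 0 < d -> exists f, A e f /\ forall x, `|f x - mu x| < d.
  apply: cluster_lemma.
    move=> e e0; have [n [m [a [m0 [ainj [Hsat [_ Hval]]]]]]] := HU e e0.
    have [f [Hf Hopt]] := inst_to_mu m0 ainj Hsat Hval.
    exists f; split => // x; case: Hf => [f0 [f1 _]].
    by rewrite f0 /= -f1 le_sum_one.
  move=> e1 e2 e10 le12 f [Hf Ho]; split => //; apply: le_trans Ho _.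
  by rewrite lerD2l.
pose K := (#|{: cube k}|%:R : R).
have K0 : 0 <= K by rewrite ler0n.
have Happ : forall e d, 0 < e -> 0 < d -> exists f, A e f /\ \sum_x `|mu x - f x| <= d.
  move=> e d e0 d0.
  have dd0 : 0 < d / (K + 1) by rewrite divr_gt0 // ltr_wpDl.
  have [f [Af Hf]] := Hcl e _ e0 dd0; exists f; split => //.
  apply: le_trans (_ : \sum_(x : cube k) d / (K + 1) <= d).
    by apply: ler_sum => x _; rewrite distrC ltW.
  rewrite sumr_const -mulr_natl -/K mulrA ler_pdivrMr ?ltr_wpDl //.
  by rewrite mulrDr mulr1 [K * d]mulrC lerDl ltW.
have Hsum : \sum_x mu x = 1.
  apply/eqP; rewrite -subr_eq0; apply/eqP; apply: small0 => d d0.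
  have [f [[[_ [f1 _]] _] Hf]] := Happ 1 d ltr01 d0.
  rewrite -f1 -sumrB; apply: le_trans (ler_norm_sum _ _ _) Hf.
have Hsupp : forall x, mu x != 0 -> P x.
  move=> x; apply: contraR => Px; apply/eqP; apply: small0 => d d0.
  have [f [[[_ [_ fs]] _] Hf]] := Happ 1 d ltr01 d0.
  have fx0 : f x = 0 by apply/eqP; apply: contraR Px => /fs.
  apply: le_trans Hf; rewrite (bigD1 x) //= fx0 subr0 lerDl.
  by apply: sumr_ge0.
exists mu; split.
  by split; [move=> x; case/andP: (bmu x)|split].
apply/eqP; rewrite eq_le EQplus_le_Opt // andbT.
apply/ler_addgt0Pr => e e0.
have B0 := Bq_ge0 Q.
have dd0 : 0 < e / 2 / (Bq Q + 1) by rewrite !divr_gt0 // ltr_wpDl.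
have [f [[_ Hof] Hf]] := Happ (e / 2) _ (divr_gt0 e0 (ltr0Sn _ 1)) dd0.
apply: le_trans (Opt_diff Q mu f) _.
apply: le_trans (lerD Hof (ler_wpM2l B0 Hf)) _.
rewrite -addrA lerD2l.
have : Bq Q * (e / 2 / (Bq Q + 1)) <= e / 2.
  have t0 : 0 <= e / 2 by rewrite divr_ge0 // ltW.
  rewrite mulrA ler_pdivrMr ?ltr_wpDl //.
  by rewrite mulrDr mulr1 [_ * (e / 2)]mulrC lerDl.
lra.
Qed.
From mathcomp Require Import zify.

Lemma ffact_ge (n m : nat) : ((n - m) ^ m <= n ^_ m)%N.
Proof.
elim: m n => [|m IH] n; first by rewrite expn0 ffactn0.
rewrite ffactnS expnS; apply: leq_mul; first exact: leq_subr.
have -> : (n - m.+1 = n.-1 - m)%N by lia.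
exact: IH.
Qed.

Lemma pow_gap (R : realType) (a b : R) k : 0 <= b -> b <= a ->
  (a ^+ k - b ^+ k) * a <= k%:R * (a - b) * a ^+ k.
Proof.
move=> b0 ba; have a0 : 0 <= a by apply: le_trans ba.
elim: k => [|k IH]; first by rewrite !expr0 subrr mul0r mul0r.
have bk : b ^+ k <= a ^+ k by rewrite lerXn2r // nnegrE.
have bk0 : 0 <= b ^+ k by rewrite exprn_ge0.
have e1 : (a ^+ k.+1 - b ^+ k.+1) * a = a * ((a ^+ k - b ^+ k) * a) + a * b ^+ k * (a - b).
  rewrite !exprS; ring.
rewrite e1 exprS.
have h1 : a * ((a ^+ k - b ^+ k) * a) <= a * (k%:R * (a - b) * a ^+ k) by apply: ler_wpM2l.
have h2 : a * b ^+ k * (a - b) <= a * a ^+ k * (a - b).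
  by apply: ler_wpM2r; [rewrite subr_ge0|apply: ler_wpM2l].
apply: le_trans (lerD h1 h2) _.
rewrite -natr1 le_eqVlt; apply/orP; left; apply/eqP; ring.
Qed.

Lemma count_lt (R : realType) (M w : nat) : (w <= M)%N ->
  \sum_(t < M) (((t < w)%N)%:R : R) = w%:R.
Proof.
move=> wM; rewrite -(big_mkord xpredT (fun t => ((t < w)%N)%:R)).
rewrite (@big_cat_nat _ _ _ w) //=.
rewrite [X in _ + X]big1_seq ?addr0; last first.
  by move=> i /andP[_]; rewrite mem_index_iota => /andP[hi _]; rewrite ltnNge hi.
rewrite (eq_big_seq (fun _ => 1)); last by move=> i; rewrite mem_index_iota => /andP[_ ->].
by rewrite sumr_const_nat subn0.
Qed.

Lemma count_eq (R : realType) N (f : 'I_N -> bool) :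
  \sum_(v < N) ((f v == true)%:R : R) + \sum_(v < N) ((f v == false)%:R : R) = N%:R.
Proof.
rewrite -big_split /= (eq_bigr (fun _ => 1)); first by rewrite sum_ord_one.
by move=> v _; case: (f v); rewrite /= ?addr0 ?add0r.
Qed.

Lemma ffact_le (n m : nat) : (n ^_ m <= n ^ m)%N.
Proof.
rewrite ffact_prod.
have -> : (n ^ m = \prod_(i < m) n)%N by rewrite prod_nat_const card_ord.
by apply: leq_prod => i _; exact: leq_subr.
Qed.
Lemma ind_ffun (R : realType) k (h : 'I_k -> bool) (z : cube k) :
  \prod_(i < k) ((h i == z i)%:R : R) = (([ffun i => h i] : cube k) == z)%:R.
Proof.
case: eqP => [<-|ne].
  by rewrite big1 // => i _; rewrite ffunE eqxx.
case: (boolP [forall i, h i == z i]) => [/forallP H|/forallPn [i Hi]].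
  by exfalso; apply: ne; apply/ffunP => i; rewrite ffunE; apply/eqP.
by rewrite (bigD1 i) //= (negbTE Hi) mul0r.
Qed.

Lemma count_flip (R : realType) N (X : bool -> 'I_N -> bool) (p q : R) b c :
  N%:R * p = \sum_(v < N) ((X true v == false)%:R : R) ->
  N%:R * q = \sum_(v < N) ((X false v == true)%:R : R) ->
  \sum_(v < N) ((X b v == c)%:R : R) = N%:R * flip p q b c.
Proof.
move=> hp hq; have e1 := count_eq R (X true); have e2 := count_eq R (X false).
case: b; case: c => /=; rewrite ?hp ?hq //.
- rewrite mulrBr mulr1 hp; lra.
- rewrite mulrBr mulr1 hq; lra.
Qed.

Lemma sum_allc (R : realType) k N (X : bool -> 'I_N -> bool) (Q : cube k -> R)
  (y : cube k) (p q : R) :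
  N%:R * p = \sum_(v < N) ((X true v == false)%:R : R) ->
  N%:R * q = \sum_(v < N) ((X false v == true)%:R : R) ->
  \sum_(c : {ffun 'I_k -> 'I_N}) Q [ffun i => X (y i) (c i)] = N%:R ^+ k * Hn Q p q y.
Proof.
move=> hp hq.
transitivity (\sum_(z : cube k) Q z * \sum_(c : {ffun 'I_k -> 'I_N})
    \prod_(i < k) ((X (y i) (c i) == z i)%:R : R)).
  under [RHS]eq_bigr => z _ do rewrite mulr_sumr.
  rewrite [RHS]exchange_big /=; apply: eq_bigr => c _.
  rewrite -(sum_ind Q [ffun i => X (y i) (c i)]); apply: eq_bigr => z _.
  by rewrite ind_ffun.
rewrite /Hn mulr_sumr; apply: eq_bigr => z _.
rewrite -(bigA_distr_bigA (fun i v => ((X (y i) v == z i)%:R : R))).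
rewrite (eq_bigr (fun i => N%:R * flip p q (y i) (z i))); last first.
  by move=> i _; apply: count_flip.
rewrite big_split /= prodr_const card_ord; ring.
Qed.
Definition Cty k M N := ((cube k * 'I_M) * {ffun 'I_k -> 'I_N})%type.
Definition Spred k M N (w : cube k -> nat) : pred (Cty k M N) :=
  fun s => ((s.1.2 < w s.1.1)%N && injectiveb s.2).

Lemma sum_S (R : realType) k M N (w : cube k -> nat)
  (F : cube k -> {ffun 'I_k -> 'I_N} -> R) :
  (forall y, w y <= M)%N ->
  \sum_(s : Cty k M N | Spred w s) F s.1.1 s.2 =
  \sum_(y : cube k) (w y)%:R * \sum_(c : {ffun 'I_k -> 'I_N} | injectiveb c) F y c.
Proof.
move=> hw; rewrite big_mkcond /=.
rewrite -(pair_big (fun _ => true) (fun _ => true)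
  (fun yt c => if Spred w (yt, c) then F yt.1 c else 0)) /=.
rewrite -(pair_big (fun _ => true) (fun _ => true)
  (fun y t => \sum_(c : {ffun 'I_k -> 'I_N}) if Spred w ((y, t), c) then F y c else 0)) /=.
apply: eq_bigr => y _.
rewrite -(count_lt R (hw y)) mulr_suml; apply: eq_bigr => t _.
rewrite [in RHS]big_mkcond mulr_sumr; apply: eq_bigr => c _.
rewrite /Spred /=; case: (t < w y)%N; case: (injectiveb c) => /=;
  by rewrite ?mul1r ?mul0r.
Qed.

Lemma card_inj_R (R : realType) k N :
  \sum_(c : {ffun 'I_k -> 'I_N} | injectiveb c) (1 : R) = (N ^_ k)%:R.
Proof.
rewrite (eq_bigl (mem [set c : {ffun 'I_k -> 'I_N} | injectiveb c])); last first.
  by move=> c; rewrite /= inE.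
by rewrite sumr_const card_inj_ffuns !card_ord.
Qed.

Lemma card_all_R (R : realType) k N :
  \sum_(c : {ffun 'I_k -> 'I_N} | injectiveb c) (1 : R) +
  \sum_(c : {ffun 'I_k -> 'I_N} | ~~ injectiveb c) (1 : R) = (N%:R) ^+ k.
Proof.
transitivity (\sum_(c : {ffun 'I_k -> 'I_N}) (1 : R)).
  by rewrite [RHS](bigID (fun c : {ffun 'I_k -> 'I_N} => injectiveb c)) /=.
by rewrite sumr_const card_ffun !card_ord -natrX.
Qed.
Lemma inj_bound (R : realType) k N (X : bool -> 'I_N -> bool) (Q : cube k -> R)
  (y : cube k) (p q : R) :
  N%:R * p = \sum_(v < N) ((X true v == false)%:R : R) ->
  N%:R * q = \sum_(v < N) ((X false v == true)%:R : R) ->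
  0 <= p <= 1 -> 0 <= q <= 1 ->
  \sum_(c : {ffun 'I_k -> 'I_N} | injectiveb c) Q [ffun i => X (y i) (c i)]
    <= (N ^_ k)%:R * Hn Q p q y + 2 * Bq Q * (N%:R ^+ k - (N ^_ k)%:R).
Proof.
move=> hp hq p01 q01.
have hall := sum_allc Q y hp hq.
rewrite (bigID (fun c : {ffun 'I_k -> 'I_N} => injectiveb c)) /= in hall.
have hD := card_all_R R k N; rewrite card_inj_R in hD.
set D := \sum_(c : {ffun 'I_k -> 'I_N} | ~~ injectiveb c) (1 : R) in hD.
have D0 : 0 <= D by apply: sumr_ge0.
have hDe : N%:R ^+ k - (N ^_ k)%:R = D by rewrite -hD addrC addKr.
rewrite hDe.
have hQ : forall z, - Bq Q <= Q z.
  move=> z; rewrite lerNl; apply: le_trans (ler_norm _) _.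
  by rewrite normrN /Bq (bigD1 z) //= lerDl; apply: sumr_ge0.
have hnon : - (Bq Q * D) <= \sum_(c : {ffun 'I_k -> 'I_N} | ~~ injectiveb c) Q [ffun i => X (y i) (c i)].
  rewrite /D mulr_sumr -sumrN; apply: ler_sum => c _; rewrite mulr1; exact: hQ.
have hH := Hn_bound Q y p01 q01.
have hH' : Hn Q p q y <= Bq Q by apply: le_trans (ler_norm _) hH.
have : \sum_(c : {ffun 'I_k -> 'I_N} | injectiveb c) Q [ffun i => X (y i) (c i)] =
   N%:R ^+ k * Hn Q p q y - \sum_(c : {ffun 'I_k -> 'I_N} | ~~ injectiveb c) Q [ffun i => X (y i) (c i)].
  by rewrite -hall addrK.
move=> ->; rewrite -hD mulrDl.
have : D * Hn Q p q y <= D * Bq Q by apply: ler_wpM2l.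
lra.
Qed.

Lemma inj_numeric (R : realType) k N : (0 < N)%N -> (2 * (k * k) + k <= N)%N ->
  ((N%:R : R) ^+ k - (N ^_ k)%:R) * N%:R <= (k * k)%:R * N%:R ^+ k /\
  (N%:R : R) ^+ k <= 2 * (N ^_ k)%:R.
Proof.
move=> N0 hN.
have kN : (k <= N)%N by lia.
set a := (N%:R : R); set b := ((N - k)%:R : R).
have b0 : 0 <= b by rewrite ler0n.
have ba : b <= a by rewrite ler_nat leq_subr.
have hab : a - b = k%:R by rewrite /a /b natrB // opprB addrC subrK.
have hbI : b ^+ k <= (N ^_ k)%:R by rewrite -natrX ler_nat ffact_ge.
have hg := pow_gap k b0 ba; rewrite hab in hg.
have hT0 : 0 <= a ^+ k by rewrite exprn_ge0 // ler0n.
have a0 : 0 <= a by rewrite ler0n.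
have h1 : (a ^+ k - (N ^_ k)%:R) * a <= (k * k)%:R * a ^+ k.
  apply: (@le_trans _ _ ((a ^+ k - b ^+ k) * a)).
    by apply: ler_wpM2r => //; rewrite lerD2l lerN2.
  by apply: le_trans hg _; rewrite natrM.
split => //.
have hN' : 2 * (k * k)%:R <= a by rewrite -natrM ler_nat; lia.
have hkk0 : 0 <= (k * k)%:R :> R by rewrite ler0n.
have Npos : 0 < a by rewrite ltr0n; lia.
have : (a ^+ k - (N ^_ k)%:R) * a * 2 <= a ^+ k * a.
  apply: (@le_trans _ _ ((k * k)%:R * a ^+ k * 2)).
    by apply: ler_wpM2r.
  rewrite -mulrA mulrC -mulrA; apply: ler_wpM2l => //; rewrite mulrC; exact: hN'.
move=> h2.
have h3 : (a ^+ k - (N ^_ k)%:R) * 2 <= a ^+ k.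
  by rewrite -(ler_pM2r Npos) mulrAC.
lra.
Qed.
Lemma weights_bound (R : realType) k (mu : cube k -> R) (M : nat) (w : cube k -> nat) :
  (forall y, 0 <= mu y) -> \sum_y mu y = 1 -> (0 < M)%N ->
  (forall y, (w y)%:R <= mu y * M%:R) -> (forall y, mu y * M%:R < (w y)%:R + 1) ->
  0 < \sum_y ((w y)%:R : R) ->
  \sum_y `|(w y)%:R / (\sum_y' ((w y')%:R : R)) - mu y| <= 2 * (#|{: cube k}|%:R / M%:R).
Proof.
move=> mu0 mu1 M0 hlo hhi W0.
set Wr := \sum_y' ((w y')%:R : R).
set A := (M%:R : R).
have A0 : 0 < A by rewrite ltr0n.
have hsA : \sum_y mu y * A = A by rewrite -mulr_suml mu1 mul1r.
have hK : \sum_(y : cube k) (1 : R) = #|{: cube k}|%:R by rewrite sumr_const.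
have hW : Wr <= A.
  rewrite -hsA /Wr; apply: ler_sum => y _; exact: hlo.
have hWA : A <= Wr + #|{: cube k}|%:R.
  rewrite -hsA -hK /Wr -big_split /=; apply: ler_sum => y _; exact: ltW (hhi y).
set ia := A^-1; set iw := Wr^-1.
have ia0 : 0 < ia by rewrite invr_gt0.
have hAia : A * ia = 1 by rewrite mulfV // gt_eqF.
have hWiw : Wr * iw = 1 by rewrite mulfV // gt_eqF.
have hiaw : ia <= iw by rewrite lef_pV2 ?posrE.
have hy : forall y, `|(w y)%:R * iw - mu y| <= (w y)%:R * iw - 2 * ((w y)%:R * ia) + mu y.
  move=> y; set u := ((w y)%:R : R).
  have u0 : 0 <= u by rewrite ler0n.
  have h1 : u * ia <= mu y.
    have := ler_wpM2r (ltW ia0) (hlo y); rewrite -mulrA hAia mulr1; exact.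
  have h2 : u * ia <= u * iw by apply: ler_wpM2l.
  rewrite ler_norml; apply/andP; split; lra.
apply: le_trans (ler_sum _ (fun y _ => hy y)) _.
rewrite !big_split /= -!mulr_suml sumrN -mulr_sumr -mulr_suml -/Wr hWiw mu1.
have : (A - Wr - #|{: cube k}|%:R) * ia <= 0.
  by rewrite pmulr_lle0 //; lra.
rewrite !mulrBl hAia.
set t := Wr * ia; set s := #|{: cube k}|%:R * ia.
move=> h.
lra.
Qed.
Lemma final_num (R : realType) (B D I T Nr eps kk : R) :
  0 <= B -> 0 < I -> 0 < Nr -> 0 < eps -> 0 <= D -> 0 <= kk ->
  D * Nr <= kk * T -> T <= 2 * I -> 8 * B * kk / eps < Nr ->
  2 * B * D / I <= eps / 2.
Proof.
move=> B0 I0 N0 e0 D0 kk0 h1 h2 h3.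
have h3' : 8 * B * kk <= eps * Nr.
  by move: h3; rewrite ltr_pdivrMr // => /ltW; rewrite [Nr * _]mulrC.
have h4 : 4 * B * D * Nr <= 4 * B * (kk * T).
  by rewrite -mulrA; apply: ler_wpM2l => //; rewrite mulr_ge0 // ler0n.
have h5 : 4 * B * (kk * T) <= 8 * B * kk * I.
  have : kk * T <= kk * (2 * I) by apply: ler_wpM2l.
  have HB : 0 <= 4 * B by rewrite mulr_ge0 // ler0n.
  move=> /(ler_wpM2l HB) => h; apply: le_trans h _.
  by rewrite le_eqVlt; apply/orP; left; apply/eqP; ring.
have h6 : 8 * B * kk * I <= eps * Nr * I by apply: ler_wpM2r => //; exact: ltW.
have h7 : 4 * B * D * Nr <= eps * I * Nr.
  apply: le_trans h4 _; apply: le_trans h5 _; apply: le_trans h6 _.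
  by rewrite le_eqVlt; apply/orP; left; apply/eqP; ring.
have h8 : 4 * B * D <= eps * I by rewrite -(ler_pM2r N0).
rewrite ler_pdivrMr //.
have -> : eps / 2 * I = (eps * I) / 2 by ring.
rewrite ler_pdivlMr //; lra.
Qed.

Lemma weight_num (R : realType) (B Kc Mr eps : R) :
  0 <= B -> 0 <= Kc -> 0 < eps -> 0 < Mr -> 4 * B * Kc / eps < Mr ->
  B * (2 * (Kc / Mr)) <= eps / 2.
Proof.
move=> B0 K0 e0 M0 h.
have h' : 4 * B * Kc <= eps * Mr by move: h; rewrite ltr_pdivrMr // => /ltW; rewrite [Mr * _]mulrC.
have -> : B * (2 * (Kc / Mr)) = (4 * B * Kc) / Mr / 2 by field; rewrite gt_eqF.
rewrite ler_pdivrMr // ler_pdivrMr //.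
have -> : eps / 2 * 2 * Mr = eps * Mr by field.
exact: h'.
Qed.

Lemma ltr_sum_cube (R : realType) k (F G : cube k -> R) :
  (forall y, F y < G y) -> \sum_y F y < \sum_y G y.
Proof.
move=> H; rewrite (bigD1 [ffun=> true]) // [X in _ < X](bigD1 [ffun=> true]) //=.
by apply: ltr_leD => //; apply: ler_sum => y _; exact: ltW.
Qed.
Lemma dir2 (R : realType) k (P : cube k -> bool) (Q : cube k -> R) :
  (exists mu : cube k -> R, prob_supported_on P mu /\ Optplus Q mu = EQplus Q) ->
  pos_useless P Q.
Proof.
move=> [mu [[mu0 [mu1 musupp]] Hopt]] eps eps0.
have B0 := Bq_ge0 Q.
set B := Bq Q in B0 *.
set Kc := #|{: cube k}|.
pose M := (Num.truncn (4 * B * Kc%:R / eps) + Kc).+1.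
pose N := (Num.truncn (8 * B * (k * k)%:R / eps) + 2 * (k * k) + k).+1.
have Mr0 : (0 : R) < M%:R by rewrite ltr0n.
have Nr0 : (0 : R) < N%:R by rewrite ltr0n.
have mule1 : forall y, mu y <= 1.
  by move=> y; rewrite -mu1 (bigD1 y) //= lerDl sumr_ge0.
pose w y := Num.truncn (mu y * M%:R).
have wM0 : forall y, 0 <= mu y * M%:R by move=> y; rewrite mulr_ge0 // ltW.
have hw_lo : forall y, (w y)%:R <= mu y * M%:R.
  by move=> y; have /andP[] := truncn_itv (wM0 y).
have hw_hi : forall y, mu y * M%:R < (w y)%:R + 1.
  by move=> y; have /andP[_] := truncn_itv (wM0 y); rewrite -natr1.
have hwM : forall y, (w y <= M)%N.
  move=> y; rewrite truncn_le_nat; apply: le_lt_trans (_ : M%:R < M.+1%:R); last by rewrite ltr_nat.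
  by rewrite -[X in _ <= X]mul1r; apply: ler_wpM2r => //; exact: ltW.
pose Wr := \sum_y ((w y)%:R : R).
have W0 : 0 < Wr.
  have h1 : M%:R < Wr + Kc%:R.
    have -> : (M%:R : R) = \sum_y mu y * M%:R by rewrite -mulr_suml mu1 mul1r.
    have -> : Wr + Kc%:R = \sum_y ((w y)%:R + 1) by rewrite big_split /= sumr_const.
    exact: ltr_sum_cube.
  have h2 : (M%:R : R) = (Num.truncn (4 * B * Kc%:R / eps))%:R + Kc%:R + 1.
    by rewrite /M -natr1 natrD.
  have h3 : (0 : R) <= (Num.truncn (4 * B * Kc%:R / eps))%:R by rewrite ler0n.
  lra.
have hweights := weights_bound mu0 mu1 (ltn0Sn _) hw_lo hw_hi W0.
have hMbig : 4 * B * Kc%:R / eps < M%:R.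
  apply: lt_le_trans (truncnS_gt _) _; rewrite ler_nat /M ltnS; exact: leq_addr.
have hNbig : 8 * B * (k * k)%:R / eps < N%:R.
  apply: lt_le_trans (truncnS_gt _) _; rewrite ler_nat /N ltnS -addnA; exact: leq_addr.
have hwn := weight_num B0 (ler0n R Kc) eps0 Mr0 hMbig.
pose V := (bool * 'I_N)%type.
pose S := Spred (M := M) (N := N) w.
have hS : forall j : 'I_#|S|, Spred w (enum_val j).
  by move=> j; have := enum_valP j.
pose a := fun (j : 'I_#|S|) (i : 'I_k) => enum_rank (((enum_val j).1.1 i, (enum_val j).2 i) : V).
have hsumS : forall F : cube k -> {ffun 'I_k -> 'I_N} -> R,
    \sum_(j < #|S|) F (enum_val j).1.1 (enum_val j).2 =
    \sum_(y : cube k) (w y)%:R * \sum_(c : {ffun 'I_k -> 'I_N} | injectiveb c) F y c.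
  move=> F; rewrite -(big_enum_val (A := S) (fun s => F s.1.1 s.2)).
  by rewrite -(sum_S F hwM); apply: eq_bigl.
have I0 : (0 : R) < (N ^_ k)%:R by rewrite ltr0n ffact_gt0 /N; lia.
have hm : (#|S|%:R : R) = Wr * (N ^_ k)%:R.
  rewrite -sum_ord_one (hsumS (fun _ _ => 1)) /Wr mulr_suml.
  by apply: eq_bigr => y _; rewrite card_inj_R.
have m0 : (0 < #|S|)%N by rewrite -(ltr0n R) hm mulr_gt0.
have mR0 : (#|S|%:R : R) != 0 by rewrite pnatr_eq0 -lt0n.
exists _, #|S|, a; split; first exact: m0.
split.
  move=> j i1 i2 /enum_rank_inj [_ h].
  by have /andP[_ /injectiveP hinj] := hS j; exact: hinj h.
split.
  exists [ffun u => (enum_val u).1].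
  rewrite /inst_val (eq_bigr (fun _ => 1)) ?sum_ord_one ?mulVf // => j _.
  have -> : Defs.restrict [ffun u => (enum_val u).1] (a j) = (enum_val j).1.1.
    by apply/ffunP => i; rewrite !ffunE enum_rankK.
  have /andP[hw _] := hS j.
  suff -> : P (enum_val j).1.1 by [].
  apply: musupp; apply/eqP => h0; move: hw; rewrite /w h0 mul0r truncn0.
  by [].
split.
  move=> x; rewrite /inst_val ler_pdivrMl ?ltr0n // mulr1 -sum_ord_one.
  by apply: ler_sum => j _; rewrite lern1 leq_b1.
move=> x.
pose X b v := x (enum_rank ((b, v) : V)).
pose p := (\sum_(v < N) ((X true v == false)%:R : R)) / N%:R.
pose q := (\sum_(v < N) ((X false v == true)%:R : R)) / N%:R.
have hp : N%:R * p = \sum_(v < N) ((X true v == false)%:R : R).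
  by rewrite /p mulrC divfK // gt_eqF.
have hq : N%:R * q = \sum_(v < N) ((X false v == true)%:R : R).
  by rewrite /q mulrC divfK // gt_eqF.
have cnt01 : forall f : 'I_N -> bool, 0 <= (\sum_(v < N) ((f v)%:R : R)) / N%:R <= 1.
  move=> f; apply/andP; split.
    by apply: divr_ge0; [apply: sumr_ge0 => v _; rewrite ler0n | exact: ltW].
  rewrite ler_pdivrMr // mul1r -sum_ord_one.
  by apply: ler_sum => v _; rewrite lern1 leq_b1.
have p01 : 0 <= p <= 1 by exact: (cnt01 (fun v => X true v == false)).
have q01 : 0 <= q <= 1 by exact: (cnt01 (fun v => X false v == true)).
pose F y (c : {ffun 'I_k -> 'I_N}) := Q [ffun i => X (y i) (c i)].
have hsum : \sum_(j < #|S|) Q (Defs.restrict x (a j)) =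
    \sum_(y : cube k) (w y)%:R * \sum_(c : {ffun 'I_k -> 'I_N} | injectiveb c) F y c.
  exact: (hsumS F).
set I := ((N ^_ k)%:R : R).
set D := (N%:R ^+ k - I : R).
have hb : \sum_(j < #|S|) Q (Defs.restrict x (a j)) <=
    I * \sum_y (w y)%:R * Hn Q p q y + Wr * (2 * B * D).
  rewrite hsum /Wr mulr_sumr mulr_suml -big_split /=.
  apply: ler_sum => y _.
  have := inj_bound Q y hp hq p01 q01; rewrite -/I -/D => h.
  have := ler_wpM2l (ler0n R (w y)) h.
  rewrite mulrDr => h'; apply: le_trans h' _; rewrite /B le_eqVlt; apply/orP; left; apply/eqP; ring.
pose f y := ((w y)%:R : R) / Wr.
have hE : \sum_y (w y)%:R * Hn Q p q y = Wr * Enoisy Q f p q.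
  rewrite EnoisyE mulr_sumr; apply: eq_bigr => y _; rewrite /f.
  by field; rewrite gt_eqF.
have hEn := Enoisy_diff Q f mu p01 q01.
have hOpt : Enoisy Q mu p q <= EQplus Q by rewrite -Hopt; exact: Opt_ub.
have hdist : \sum_x `|f x - mu x| <= 2 * (Kc%:R / M%:R) by exact: hweights.
have hNk : (2 * (k * k) + k <= N)%N by rewrite /N; apply: leqW; rewrite -addnA; exact: leq_addl.
have [hn1 hn2] := inj_numeric R (ltn0Sn _) hNk.
have hfin : 2 * B * D / I <= eps / 2.
  apply: (final_num B0 I0 Nr0 eps0 _ (ler0n R (k * k)) hn1 hn2 hNbig).
  by rewrite /D subr_ge0 /I -natrX ler_nat ffact_le.
have hBd : Bq Q * \sum_x `|f x - mu x| <= eps / 2.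
  exact: le_trans (ler_wpM2l B0 hdist) hwn.
have hEf : Enoisy Q f p q <= EQplus Q + eps / 2.
  apply: le_trans hEn _; apply: lerD => //.
have h2BD : 2 * B * D <= eps / 2 * I by rewrite -ler_pdivrMr.
rewrite /inst_val hm ler_pdivrMl ?mulr_gt0 //.
apply: le_trans hb _; rewrite hE.
have h1 : I * (Wr * Enoisy Q f p q) <= I * (Wr * (EQplus Q + eps / 2)).
  by apply: ler_wpM2l; [exact: ltW | apply: ler_wpM2l => //; exact: ltW].
have h2 : Wr * (2 * B * D) <= Wr * (eps / 2 * I) by apply: ler_wpM2l => //; exact: ltW.
apply: le_trans (lerD h1 h2) _.
by rewrite le_eqVlt; apply/orP; left; apply/eqP; field.
Qed.

Unset Implicit Arguments.

Theorem theorem6p2 (R : realType) (k : nat) (P : cube k -> bool) (Q : cube k -> R) :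
  pos_useless P Q <->
  exists mu : cube k -> R, prob_supported_on P mu /\ Optplus Q mu = EQplus Q.
Proof.
split; [exact: dir1 | exact: dir2].
Qed.
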